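(* For every tetrahedral erasure channel $W$, $A(W^{s})\le A(W)\bigl(1-A(W)/3\bigr)$ and $A(W^{p})\le A(W)\bigl(1-A(W)/3\bigr)$.
   Context: $\mathrm{TEC}(p,q,r,s,t)$ denotes a tetrahedral erasure channel with parameters $p,q,r,s,t\ge0$ summing to $1$. Its moment of inertia is $A(\mathrm{TEC}(p,q,r,s,t))=(q-r)^2+(r-s)^2+(s-q)^2$. For $W=\mathrm{TEC}(p,q,r,s,t)$, the serial child is $W^{s}=\mathrm{TEC}(p^2,\ ps+sq+qp,\ pq+qr+rp,\ pr+rs+sp,\ 1-\text{(sum of the other four)})$ and the parallel child is $W^{p}=\mathrm{TEC}(1-\text{(sum of the other four)},\ ts+sq+qt,\ tq+qr+rt,\ tr+rs+st,\ t^2)$. *)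

(* Defs.v *)
From Stdlib Require Import Reals Lra.
Open Scope R_scope.

Record TEC : Type := mkTEC {
  tp : R; tq : R; tr : R; ts : R; tt : R }.

Definition is_TEC (W : TEC) : Prop :=
  0 <= tp W /\ 0 <= tq W /\ 0 <= tr W /\ 0 <= ts W /\ 0 <= tt W /\
  tp W + tq W + tr W + ts W + tt W = 1.

Definition inertia (W : TEC) : R :=
  (tq W - tr W)^2 + (tr W - ts W)^2 + (ts W - tq W)^2.

Definition serial (W : TEC) : TEC :=
  let p := tp W in let q := tq W in let r := tr W in let s := ts W in
  let p' := p^2 in
  let q' := p*s + s*q + q*p in
  let r' := p*q + q*r + r*p in
  let s' := p*r + r*s + s*p in
  mkTEC p' q' r' s' (1 - (p' + q' + r' + s')).

Definition parallel (W : TEC) : TEC :=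
  let q := tq W in let r := tr W in let s := ts W in let t := tt W in
  let q' := t*s + s*q + q*t in
  let r' := t*q + q*r + r*t in
  let s' := t*r + r*s + s*t in
  let t' := t^2 in
  mkTEC (1 - (q' + r' + s' + t')) q' r' s' t'.

(* Main.v *)
Require Import Defs.
From Stdlib Require Import Reals.
From Stdlib Require Import Lra Psatz.
Open Scope R_scope.

Lemma term_bound (u d : R) : 0 <= u -> d <= 1 - u -> - d <= 1 - u ->
  u^2 * d^2 <= d^2 - (2/3) * d^4.
Proof.
  intros Hu H1 H2.
  assert (Hd : d^2 <= 1 - u) by nra.
  assert (Hd2 : d^2 <= 1 - u^2) by nra.
  assert (0 <= d^2) by nra.
  nra.
Qed.

Lemma key (p q r s : R) : 0 <= p -> 0 <= q -> 0 <= r -> 0 <= s ->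
  p + q + r + s <= 1 ->
  let q' := p*s + s*q + q*p in
  let r' := p*q + q*r + r*p in
  let s' := p*r + r*s + s*p in
  (q' - r')^2 + (r' - s')^2 + (s' - q')^2 <=
  ((q - r)^2 + (r - s)^2 + (s - q)^2) *
  (1 - ((q - r)^2 + (r - s)^2 + (s - q)^2) / 3).
Proof.
  intros Hp Hq Hr Hs Hsum q' r' s'.
  assert (E1 : q' - r' = (p + q) * (s - r)) by (unfold q', r'; ring).
  assert (E2 : r' - s' = (p + r) * (q - s)) by (unfold r', s'; ring).
  assert (E3 : s' - q' = (p + s) * (r - q)) by (unfold s', q'; ring).
  rewrite E1, E2, E3.
  pose proof (term_bound (p+q) (s-r) ltac:(lra) ltac:(lra) ltac:(lra)) as T1.
  pose proof (term_bound (p+r) (q-s) ltac:(lra) ltac:(lra) ltac:(lra)) as T2.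
  pose proof (term_bound (p+s) (r-q) ltac:(lra) ltac:(lra) ltac:(lra)) as T3.
  assert (Id : ((q - r)^2 + (r - s)^2 + (s - q)^2)^2 =
     2 * ((s-r)^4 + (q-s)^4 + (r-q)^4)) by ring.
  assert (Eq : ((p + q) * (s - r))^2 + ((p + r) * (q - s))^2 + ((p + s) * (r - q))^2
     = (p+q)^2*(s-r)^2 + (p+r)^2*(q-s)^2 + (p+s)^2*(r-q)^2) by ring.
  rewrite Eq.
  assert (Rhs : ((q - r)^2 + (r - s)^2 + (s - q)^2) *
     (1 - ((q - r)^2 + (r - s)^2 + (s - q)^2) / 3) =
     ((s-r)^2 - 2/3*(s-r)^4) + ((q-s)^2 - 2/3*(q-s)^4) + ((r-q)^2 - 2/3*(r-q)^4)).
  { replace (((q - r)^2 + (r - s)^2 + (s - q)^2) *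
     (1 - ((q - r)^2 + (r - s)^2 + (s - q)^2) / 3)) with
     (((q - r)^2 + (r - s)^2 + (s - q)^2) - ((q - r)^2 + (r - s)^2 + (s - q)^2)^2/3) by (unfold Rdiv; ring).
    rewrite Id. field. }
  rewrite Rhs. lra.
Qed.

Theorem mainTheorem2 (W : TEC) (HW : is_TEC W) :
  inertia (serial W) <= inertia W * (1 - inertia W / 3) /\
  inertia (parallel W) <= inertia W * (1 - inertia W / 3).
Proof.
  destruct W as [p q r s t]; unfold is_TEC in HW; simpl in HW.
  destruct HW as [Hp [Hq [Hr [Hs [Ht Hsum]]]]].
  unfold inertia, serial, parallel; simpl.
  split.
  - apply (key p q r s); lra.
  - apply (key t q r s); lra.
Qed.
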